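(* Let $L(y,z)$ be a positive cell complexity function, monotonically increasing in $y$ and $z$, with $L(y,z)=\Theta(z^a)$ for some constant $a>0$ (i.e. there are constants $0<c_1\le c_2$ with $c_1z^a\le L(y,z)\le c_2 z^a$ for all arguments). Consider, as $N\to\infty$, a 1-layered FDCA $\mathcal{A}_1$ and a 2-layered FDCA $\mathcal{A}_2$ with working zone of size $N$ recognizing the same nontrivial class $D$ of input configurations, with $P_1=|D|$, $P_2$ the cardinality of the class of layer-$1$ local configurations recognized by the top (layer-2) cell of $\mathcal{A}_2$, $p$ the cardinality of the class of layer-$0$ local configurations recognized by a layer-$1$ cell of $\mathcal{A}_2$, and $n$ the size of the layer-$1$ basic neighborhood of $\mathcal{A}_2$ (all of $P_1,P_2,p$ positive). Then: (a) $\dfrac{L(N,P_2)}{L(N,P_1)}\to 0$ if and only if $\dfrac{P_2}{P_1}\to 0$; (b) if $p=o\!\left(P_1/N^{1/a}\right)$, then $\dfrac{N\cdot L(n,p)}{L(N,P_1)}\to 0$.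
   Context: An FDCA is a finite layered cellular automaton on $\mathbb{Z}^2$ with binary alphabets, square basic neighborhoods $N_i=[-r_i,r_i]^2$, a square working zone $W=[w]^2$ with fixed boundary conditions, where layer-$i$ states are computed as $X_i(c)=f_i(x_{i-1,c})$ with $x_{i-1,c}(z)=X_{i-1}(c+z)$, $z\in N_i$. An automaton recognizes a class $D$ of input configurations by a cell $c$ of layer $i$ if some state $k$ satisfies $X_i(c)=k$ iff $X_0\in D$; a cell recognizes a class of local configurations of the preceding layer analogously. A 1-layered (resp. 2-layered) FDCA has a cell $c$ with $c+N_1=W$ (resp. $c+N_2=W$), recognition being done by that top-layer cell, so its basic neighborhood has size $N=|W|$. The cell complexity $L(n,p)$ depends on the neighborhood size $n$ and the cardinality $p$ of the class of local configurations the cell recognizes. *)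

(* Defs.v *)
From Stdlib Require Import ZArith Reals.
From Coquelicot Require Import Coquelicot.
From mathcomp Require Import all_boot.

Set Implicit Arguments.
Unset Strict Implicit.
Unset Printing Implicit Defensive.

Definition cell := (Z * Z)%type.
Definition cadd (c d : cell) : cell := ((c.1 + d.1)%Z, (c.2 + d.2)%Z).

(* Working zone W = [w]^2, here realised as {0,...,w-1}^2 (a translate of {1..w}^2). *)
Definition inW (w : nat) (c : cell) : Prop :=
  (0 <= c.1 < Z.of_nat w)%Z /\ (0 <= c.2 < Z.of_nat w)%Z.
Definition inWb (w : nat) (c : cell) : bool :=
  ((0 <=? c.1) && (c.1 <? Z.of_nat w) && (0 <=? c.2) && (c.2 <? Z.of_nat w))%Z.

(* Square basic neighborhood N = [-r, r]^2, indexed by a finite type. *)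
Definition nbhd (r : nat) : finType := ('I_(r.*2.+1) * 'I_(r.*2.+1))%type.
Definition offset (r : nat) (z : nbhd r) : cell :=
  ((Z.of_nat (nat_of_ord z.1) - Z.of_nat r)%Z, (Z.of_nat (nat_of_ord z.2) - Z.of_nat r)%Z).
Definition nbhd_size (r : nat) : nat := (r.*2.+1 * r.*2.+1)%N.

Definition lconf (r : nat) := {ffun nbhd r -> bool}.

Definition input (w : nat) := {ffun ('I_w * 'I_w) -> bool}.

(* A finite layered cellular automaton with working zone [w]^2:
   layers 0..fd_m, layer i (1 <= i <= fd_m) has radius fd_r i and local rule fd_f i;
   fixed boundary conditions: outside W, layer i is constantly fd_bnd i. *)
Record fdca (w : nat) := FDCA {
  fd_m : nat;
  fd_r : nat -> nat;
  fd_f : forall i : nat, lconf (fd_r i) -> bool;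
  fd_bnd : nat -> bool
}.
Arguments fd_m {w}.
Arguments fd_r {w}.
Arguments fd_f {w} f i.
Arguments fd_bnd {w}.

Definition input_at (w : nat) (X0 : input w) (b : bool) (c : cell) : bool :=
  if inWb w c then
    match insub (Z.to_nat c.1) : option 'I_w, insub (Z.to_nat c.2) : option 'I_w with
    | Some i, Some j => X0 (i, j)
    | _, _ => b
    end
  else b.

Definition local (r : nat) (X : cell -> bool) (c : cell) : lconf r :=
  [ffun z => X (cadd c (offset z))].

Fixpoint layer (w : nat) (A : fdca w) (X0 : input w) (i : nat) : cell -> bool :=
  match i with
  | 0 => fun c => input_at X0 (fd_bnd A 0) c
  | i'.+1 => fun c =>
      if inWb w c then fd_f A i'.+1 (local (fd_r A i'.+1) (layer A X0 i') c)
      else fd_bnd A i'.+1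
  end.

Definition covers (w r : nat) (c : cell) : Prop :=
  forall d : cell, inW w d <-> exists z : nbhd r, d = cadd c (offset z).

Definition recognizes (w : nat) (A : fdca w) (i : nat) (c : cell) (D : {set input w}) : Prop :=
  exists k : bool, forall X0 : input w, layer A X0 i c = k <-> X0 \in D.

Definition recognizes_local (r : nat) (f : lconf r -> bool) (C : {set lconf r}) : Prop :=
  exists k : bool, forall x : lconf r, f x = k <-> x \in C.

Definition fdca1_recognizes (w : nat) (A : fdca w) (D : {set input w}) : Prop :=
  fd_m A = 1%N /\ exists c : cell, inW w c /\ covers w (fd_r A 1) c /\ recognizes A 1 c D.

Definition fdca2_recognizes (w : nat) (A : fdca w) (D : {set input w}) : Prop :=
  fd_m A = 2%N /\ exists c : cell, inW w c /\ covers w (fd_r A 2) c /\ recognizes A 2 c D.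

Definition nontrivial (w : nat) (D : {set input w}) : Prop := D != set0 /\ D != setT.

(* Main.v *)
Require Import Defs.
From Stdlib Require Import ZArith Reals.
From Coquelicot Require Import Coquelicot.
From Stdlib Require Import Lra Psatz Lia.
Module Aux.
Open Scope R_scope.

Lemma Rpower_pos' x y : 0 < Rpower x y.
Proof. unfold Rpower; apply exp_pos. Qed.

Lemma Rpower_inv x a : 0 < x -> Rpower (/ x) a = / Rpower x a.
Proof.
  intros Hx. rewrite <- Rpower_Ropp. unfold Rpower. rewrite ln_Rinv by exact Hx.
  f_equal; ring.
Qed.

Lemma Rpower_div x y a : 0 < x -> 0 < y -> Rpower (x / y) a = Rpower x a / Rpower y a.
Proof.
  intros Hx Hy. unfold Rdiv. rewrite <- Rpower_mult_distr; auto.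
  - rewrite Rpower_inv; auto.
  - apply Rinv_0_lt_compat; auto.
Qed.

Lemma powlim (u : nat -> R) a : 0 < a -> (forall k, 0 < u k) ->
  (is_lim_seq u 0 <-> is_lim_seq (fun k => Rpower (u k) a) 0).
Proof.
  intros Ha Hu. rewrite <- !is_lim_seq_spec. simpl. split.
  - intros H eps. assert (He : 0 < Rpower eps (/ a)) by apply Rpower_pos'.
    destruct (H (mkposreal _ He)) as [M HM]. exists M. intros k Hk.
    specialize (HM k Hk). simpl in HM.
    rewrite Rminus_0_r, Rabs_pos_eq in HM by (left; apply Hu).
    rewrite Rminus_0_r, Rabs_pos_eq by (left; apply Rpower_pos').
    replace (pos eps) with (Rpower (Rpower eps (/ a)) a).
    + apply Rlt_Rpower_l; auto.
    + rewrite Rpower_mult. rewrite Rinv_l by lra. apply Rpower_1. apply cond_pos.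
  - intros H eps. assert (He : 0 < Rpower eps a) by apply Rpower_pos'.
    destruct (H (mkposreal _ He)) as [M HM]. exists M. intros k Hk.
    specialize (HM k Hk). simpl in HM.
    rewrite Rminus_0_r, Rabs_pos_eq in HM by (left; apply Rpower_pos').
    rewrite Rminus_0_r, Rabs_pos_eq by (left; apply Hu).
    destruct (Rlt_or_le (u k) eps) as [h|h]; auto.
    exfalso. assert (Rpower eps a <= Rpower (u k) a).
    { apply Rle_Rpower_l; [lra|]. split; [apply cond_pos|exact h]. }
    lra.
Qed.

Lemma ratio_bounds c1 c2 l1 l2 x1 x2 : 0 < c1 -> c1 <= c2 -> 0 < x1 -> 0 < x2 ->
  c1 * x2 <= l2 <= c2 * x2 -> c1 * x1 <= l1 <= c2 * x1 ->
  (c1 / c2) * (x2 / x1) <= l2 / l1 <= (c2 / c1) * (x2 / x1).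
Proof.
  intros. assert (0 < l1) by nra. assert (0 < c2) by lra.
  split.
  - replace ((c1 / c2) * (x2 / x1)) with ((c1 * x2) / (c2 * x1)) by (field; lra).
    apply Rle_trans with (l2 / (c2 * x1)).
    + apply Rmult_le_compat_r; [left; apply Rinv_0_lt_compat; nra | lra].
    + apply Rmult_le_compat_l; [nra|]. apply Rinv_le_contravar; lra.
  - replace ((c2 / c1) * (x2 / x1)) with ((c2 * x2) / (c1 * x1)) by (field; lra).
    apply Rle_trans with (l2 / (c1 * x1)).
    + apply Rmult_le_compat_l; [nra|]. apply Rinv_le_contravar; nra.
    + apply Rmult_le_compat_r; [left; apply Rinv_0_lt_compat; nra | lra].
Qed.

Lemma core (L : nat -> nat -> R) (a c1 c2 : R)
  (L_pos : forall y z, (0 < L y z)%R)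
  (a_pos : (0 < a)%R) (c1_pos : (0 < c1)%R) (c1_le_c2 : (c1 <= c2)%R)
  (L_theta : forall y z, (0 < z)%nat ->
      (c1 * Rpower (INR z) a <= L y z <= c2 * Rpower (INR z) a)%R)
  (N n P1 P2 p : nat -> nat)
  (HNpos : forall k, (0 < INR (N k))%R)
  (P1_pos : forall k, (0 < P1 k)%nat)
  (P2_pos : forall k, (0 < P2 k)%nat)
  (p_pos : forall k, (0 < p k)%nat) :
  (is_lim_seq (fun k => L (N k) (P2 k) / L (N k) (P1 k))%R 0
     <-> is_lim_seq (fun k => INR (P2 k) / INR (P1 k))%R 0)
  /\
  (is_lim_seq (fun k => INR (p k) / (INR (P1 k) / Rpower (INR (N k)) (1 / a)))%R 0 ->
   is_lim_seq (fun k => INR (N k) * L (n k) (p k) / L (N k) (P1 k))%R 0).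
Proof.
  assert (Hc2 : (0 < c2)%R) by lra.
  assert (HP1r : forall k, (0 < INR (P1 k))%R) by (intro; apply lt_0_INR; auto).
  assert (HP2r : forall k, (0 < INR (P2 k))%R) by (intro; apply lt_0_INR; auto).
  assert (Hpr : forall k, (0 < INR (p k))%R) by (intro; apply lt_0_INR; auto).
  assert (Hb : forall k, (c1 / c2 * Rpower (INR (P2 k) / INR (P1 k)) a <=
      L (N k) (P2 k) / L (N k) (P1 k) <= c2 / c1 * Rpower (INR (P2 k) / INR (P1 k)) a)%R).
  { intro k. rewrite Rpower_div by auto. apply ratio_bounds; auto using Rpower_pos'. }
  split.
  - rewrite (powlim (fun k => INR (P2 k) / INR (P1 k))%R _ a_pos) by (intro; apply Rdiv_lt_0_compat; auto).
    split; intro H.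
    + apply is_lim_seq_le_le with (u := fun _ => 0%R)
        (w := fun k => (c2 / c1 * (L (N k) (P2 k) / L (N k) (P1 k)))%R).
      * intro k. split; [left; apply Rpower_pos'|].
        destruct (Hb k) as [h _].
        assert (0 < c1 / c2)%R by (apply Rdiv_lt_0_compat; lra).
        replace (Rpower (INR (P2 k) / INR (P1 k)) a) with
          ((c2 / c1) * ((c1 / c2) * Rpower (INR (P2 k) / INR (P1 k)) a))%R
          by (field; lra).
        apply Rmult_le_compat_l; [left; apply Rdiv_lt_0_compat; lra | exact h].
      * apply is_lim_seq_const.
      * replace (Finite 0) with (Rbar_mult (c2 / c1) 0) by (simpl; f_equal; ring).
        apply is_lim_seq_scal_l; exact H.
    + apply is_lim_seq_le_le with (u := fun _ => 0%R)
        (w := fun k => (c2 / c1 * Rpower (INR (P2 k) / INR (P1 k)) a)%R).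
      * intro k. split; [|apply Hb].
        left. apply Rdiv_lt_0_compat; apply L_pos.
      * apply is_lim_seq_const.
      * replace (Finite 0) with (Rbar_mult (c2 / c1) 0) by (simpl; f_equal; ring).
        apply is_lim_seq_scal_l; exact H.
  - intro H.
    rewrite (powlim _ _ a_pos) in H.
    2:{ intro k. apply Rdiv_lt_0_compat; auto. apply Rdiv_lt_0_compat; auto.
        apply Rpower_pos'. }
    apply is_lim_seq_le_le with (u := fun _ => 0%R)
        (w := fun k => (c2 / c1 * Rpower (INR (p k) / (INR (P1 k) / Rpower (INR (N k)) (1 / a))) a)%R).
    + intro k. split.
      * left. apply Rdiv_lt_0_compat; [|apply L_pos].
        apply Rmult_lt_0_compat; auto.
      * assert (HM : (0 < Rpower (INR (N k)) (1 / a))%R) by apply Rpower_pos'.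
        replace (INR (p k) / (INR (P1 k) / Rpower (INR (N k)) (1 / a)))%R
          with (INR (p k) * Rpower (INR (N k)) (1 / a) / INR (P1 k))%R
          by (pose proof (HP1r k); field; repeat split; lra).
        rewrite Rpower_div by (auto; apply Rmult_lt_0_compat; auto).
        rewrite <- Rpower_mult_distr by auto.
        rewrite Rpower_mult.
        replace (1 / a * a)%R with 1%R by (field; lra).
        rewrite Rpower_1 by auto.
        destruct (L_theta (n k) (p k) (p_pos k)) as [_ h1].
        destruct (L_theta (N k) (P1 k) (P1_pos k)) as [h2 _].
        set (x := Rpower (INR (p k)) a) in *.
        set (x1 := Rpower (INR (P1 k)) a) in *.
        assert (0 < x)%R by apply Rpower_pos'.
        assert (0 < x1)%R by apply Rpower_pos'.
        set (l := L (n k) (p k)) in *. set (l1 := L (N k) (P1 k)) in *.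
        assert (0 < l1)%R by apply L_pos.
        specialize (HNpos k). set (m := INR (N k)) in *.
        replace (c2 / c1 * (x * m / x1))%R with ((m * (c2 * x)) / (c1 * x1))%R
          by (field; lra).
        apply Rle_trans with (m * (c2 * x) / l1)%R.
        -- apply Rmult_le_compat_r; [left; apply Rinv_0_lt_compat; lra|].
           apply Rmult_le_compat_l; lra.
        -- apply Rmult_le_compat_l; [apply Rmult_le_pos; [lra|apply Rmult_le_pos; lra]|]. apply Rinv_le_contravar; [apply Rmult_lt_0_compat|]; lra.
    + apply is_lim_seq_const.
    + replace (Finite 0) with (Rbar_mult (c2 / c1) 0) by (simpl; f_equal; ring).
      apply is_lim_seq_scal_l; exact H.
Qed.
End Aux.
Import Aux.
From mathcomp Require Import all_boot.

Theorem corollary10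
  (L : nat -> nat -> R) (a c1 c2 : R)
  (L_pos : forall y z, (0 < L y z)%R)
  (L_mono_y : forall y y' z, (y <= y')%coq_nat -> (L y z <= L y' z)%R)
  (L_mono_z : forall y z z', (z <= z')%coq_nat -> (L y z <= L y z')%R)
  (a_pos : (0 < a)%R) (c1_pos : (0 < c1)%R) (c1_le_c2 : (c1 <= c2)%R)
  (L_theta : forall y z, (0 < z)%coq_nat ->
      (c1 * Rpower (INR z) a <= L y z <= c2 * Rpower (INR z) a)%R)
  (w : nat -> nat)
  (A1 A2 : forall k : nat, fdca (w k))
  (D : forall k : nat, {set input (w k)})
  (N n P1 P2 p : nat -> nat)
  (HN : forall k, N k = (w k * w k)%N)
  (HNinf : is_lim_seq (fun k => INR (N k)) p_infty)
  (HD : forall k, nontrivial (D k))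
  (HA1 : forall k, fdca1_recognizes (A1 k) (D k))
  (HA2 : forall k, fdca2_recognizes (A2 k) (D k))
  (HP1 : forall k, P1 k = #|D k|)
  (HP2 : forall k, exists C : {set lconf (fd_r (A2 k) 2)},
           recognizes_local (fd_f (A2 k) 2) C /\ P2 k = #|C|)
  (Hp : forall k, exists C : {set lconf (fd_r (A2 k) 1)},
           recognizes_local (fd_f (A2 k) 1) C /\ p k = #|C|)
  (Hn : forall k, n k = nbhd_size (fd_r (A2 k) 1))
  (P1_pos : forall k, (0 < P1 k)%coq_nat)
  (P2_pos : forall k, (0 < P2 k)%coq_nat)
  (p_pos : forall k, (0 < p k)%coq_nat) :
  (is_lim_seq (fun k => L (N k) (P2 k) / L (N k) (P1 k))%R 0
     <-> is_lim_seq (fun k => INR (P2 k) / INR (P1 k))%R 0)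
  /\
  (is_lim_seq (fun k => INR (p k) / (INR (P1 k) / Rpower (INR (N k)) (1 / a)))%R 0 ->
   is_lim_seq (fun k => INR (N k) * L (n k) (p k) / L (N k) (P1 k))%R 0).
Proof.
  apply (core L a c1 c2 L_pos a_pos c1_pos c1_le_c2 L_theta N n P1 P2 p); auto.
  intro k. apply lt_0_INR. destruct (HA1 k) as [_ [c [[[h1 h2] _] _]]].
  assert (Hw : (0 < w k)%coq_nat) by lia. rewrite HN.
  exact (Nat.mul_pos_pos _ _ Hw Hw).
Qed.
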